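(* For each integer $k\ge 4$ and each integer $w\ge 4$, $m_2^{(2)}(k-1,w)$ equals the Griesmer upper bound for $m_2^{(2)}(k-1,w)$, i.e. the largest integer $n$ with $n\ge g_2^{(k-3)}(k,n-w)$.
   Context: For a prime power $q$ and $N\ge1$, a multiset of points in $\mathrm{PG}(N,q)$ is a map $\mathcal{K}$ from the points to $\mathbb{Z}_{\ge0}$, with $\mathcal{K}(S)=\sum_{P\in S}\mathcal{K}(P)$; its cardinality is $\mathcal{K}(\mathrm{PG}(N,q))$. Dimensions are projective. For $0\le r\le N-1$ and a positive integer $w$, $m_q^{(r)}(N,w)$ is the maximum cardinality of a multiset of points in $\mathrm{PG}(N,q)$ such that every $r$-dimensional subspace has multiplicity at most $w$. Let $v_j=(q^j-1)/(q-1)$ and, for $1\le s\le k$, $g_q^{(s)}(k,d)=d+\sum_{i=1}^{k-s}\lceil d/(q^iv_s)\rceil$. The Griesmer upper bound for $m_q^{(r)}(N,w)$ is the largest integer $n$ with $n\ge g_q^{(N-r)}(N+1,n-w)$. *)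

(* Defs.v *)
From mathcomp Require Import all_boot all_order all_algebra.
Set Implicit Arguments. Unset Strict Implicit. Unset Printing Implicit Defensive.
Import GRing.Theory.

(* Projective geometry PG(N,2): vector space F_2^(N+1), row vectors.
   Over F_2 each projective point has a unique nonzero representative,
   so points of PG(N,2) = nonzero vectors of 'rV['F_2]_(N.+1). *)
Notation vec2 N := 'rV['F_2]_(N.+1).

(* A multiset of points: a map from vectors to nat; its value at the zero
   vector is irrelevant (0 is not a point) and is never used. *)
Definition multiset2 (N : nat) := vec2 N -> nat.

Definition mult2 N (K : multiset2 N) (S : pred (vec2 N)) : nat :=
  \sum_(v : vec2 N | (v != 0%R) && S v) K v.

Definition card_ms2 N (K : multiset2 N) : nat := mult2 K predT.

(* The projective r-dimensional subspaces of PG(N,2) are the row spaces of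
   (r+1) x (N+1) matrices of rank r+1; its points are the nonzero vectors
   in the row space. *)
Definition in_sub N r (S : 'M['F_2]_(r.+1, N.+1)) : pred (vec2 N) :=
  fun v => (v <= S)%MS.

Definition feasible2 N r w (K : multiset2 N) : Prop :=
  forall S : 'M['F_2]_(r.+1, N.+1), \rank S = r.+1 -> mult2 K (in_sub S) <= w.

Definition is_largest (P : nat -> Prop) (n : nat) : Prop :=
  P n /\ forall m, P m -> m <= n.

Definition is_m2 N r w (n : nat) : Prop :=
  is_largest (fun m => exists K : multiset2 N, feasible2 r w K /\ card_ms2 K = m) n.

Definition vq (q j : nat) : nat := (q ^ j - 1) %/ (q - 1).

Definition ceildiv (a b : nat) : nat := (a + b - 1) %/ b.

Definition griesmer_g (q s k d : nat) : nat :=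
  d + \sum_(1 <= i < (k - s).+1) ceildiv d (q ^ i * vq q s).

(* We require w <= n so that d = n-w is a
   nonnegative integer; for n < w the condition holds trivially (g < 0 <= n),
   and n = w always satisfies it, so this does not change the largest n. *)
Definition griesmer_ok (q N r w n : nat) : Prop :=
  w <= n /\ griesmer_g q (N - r) N.+1 (n - w) <= n.

(* Main.v *)
Require Import Defs.
From mathcomp Require Import all_boot all_order all_algebra zify.
Import GRing.Theory.
Set Implicit Arguments. Unset Strict Implicit.


Lemma F2_cases (c : 'F_2) : c = 0%R \/ c = 1%R.
Proof. case: c => [[|[|//]] ?]; [left|right]; exact: val_inj. Qed.
Lemma F2_addxx (c : 'F_2) : (c + c = 0)%R.
Proof. by case: (F2_cases c) => ->; rewrite ?addr0 //; apply: val_inj. Qed.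
Lemma vec_addxx n (v : 'rV['F_2]_n) : (v + v = 0)%R.
Proof. by apply/rowP => i; rewrite !mxE F2_addxx. Qed.
Lemma cardF2 : #|'F_2| = 2. Proof. by rewrite card_Fp. Qed.

Section Geo.
Variable N : nat.
Local Notation V := 'rV['F_2]_(N.+1).
Definition sp j (A : 'M['F_2]_(j, N.+1)) : pred V := fun v => (v <= A)%MS.

Lemma cardV : #|{: V}| = 2 ^ N.+1.
Proof. by rewrite card_mx cardF2 mul1n. Qed.

Lemma card_sp j (A : 'M['F_2]_(j, N.+1)) : row_free A -> #|sp A| = 2 ^ j.
Proof.
move=> fA; transitivity #|image (mulmx^~ A) (@predT 'rV['F_2]_j)|.
  apply: eq_card => v; apply/idP/imageP => [/submxP [u ->]|[u _ ->]]; [by exists u | exact: submxMl].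
by rewrite card_image ?cardT ?size_enum_ord -?cardT ?card_mx ?cardF2 ?mul1n //; exact: row_free_inj.
Qed.

Lemma sub_col j (A : 'M['F_2]_(j, N.+1)) (x y : V) :
  (y <= col_mx x A)%MS = (y <= A)%MS || ((y + x)%R <= A)%MS.
Proof.
rewrite -addsmxE; apply/sub_addsmxP/orP.
- case=> [[u1 u2]] /= ->; case: (F2_cases (u1 ord0 ord0)) => h.
    left; rewrite (_ : u1 = 0%R) ?mul0mx ?add0r ?submxMl //.
    by apply/matrixP => i j'; rewrite !ord1 mxE h.
  right; rewrite (_ : u1 = (1%:M)%R) ?mul1mx; last first.
    by apply/matrixP => i j'; rewrite !ord1 mxE h.
  by rewrite addrC addrA vec_addxx add0r submxMl.
- case=> /submxP [D hD].
    by exists (0%R, D); rewrite /= mul0mx add0r.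
  exists ((1%:M)%R, D); rewrite /= mul1mx -hD addrA addrC addrA vec_addxx add0r //.
Qed.

Lemma row_free_col j (A : 'M['F_2]_(j, N.+1)) (x : V) :
  row_free A -> ~~ (x <= A)%MS -> row_free (col_mx x A).
Proof.
move=> fA xA.
have x0 : x != 0%R by apply: contra xA => /eqP ->; rewrite sub0mx.
rewrite /row_free -addsmxE mxrank_disjoint_sum.
  by rewrite rank_rV (eqP fA) x0.
apply/eqP; rewrite -mxrank_eq0; apply/negPn/negP => h.
have r1 : \rank (x :&: A)%MS = 1.
  have := mxrankS (capmxSl x A); rewrite rank_rV.
  by rewrite x0; case: (\rank _) h => [|[|]].
have : (x <= x :&: A)%MS.
  by rewrite -(mxrank_leqif_sup (capmxSl x A)) r1 rank_rV x0.
by move/(submx_trans)/(_ (capmxSr x A)); rewrite (negbTE xA).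
Qed.

Lemma exists_out j (A : 'M['F_2]_(j, N.+1)) :
  row_free A -> j < N.+1 -> exists x : V, ~~ (x <= A)%MS.
Proof.
move=> fA lt; have : 0 < #|[predC sp A]|.
  have := cardC (sp A); rewrite card_sp // cardV => h.
  have : 2 ^ j < 2 ^ N.+1 by rewrite ltn_exp2l.
  by move=> lt2; rewrite -(ltn_add2l (2 ^ j)) addn0 h.
by case/card_gt0P => x; rewrite inE => hx; exists x.
Qed.

Lemma card_split j (A : 'M['F_2]_(j, N.+1)) (K : multiset2 N) :
  card_ms2 K = mult2 K (sp A) + \sum_(y : V | ~~ (y <= A)%MS) K y.
Proof.
rewrite /card_ms2 /mult2 (bigID (fun v : V => (v <= A)%MS)) /=; congr (_ + _).
  by apply: eq_bigl => v; rewrite andbT.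
apply: eq_bigl => v; rewrite andbT; case: (altP (v =P 0%R)) => [->|] //=.
by rewrite sub0mx.
Qed.

Lemma mult_col j (A : 'M['F_2]_(j, N.+1)) (K : multiset2 N) (x : V) :
  ~~ (x <= A)%MS ->
  mult2 K (sp (col_mx x A)) = mult2 K (sp A) + \sum_(y : V | ((y + x)%R <= A)%MS) K y.
Proof.
move=> xA; rewrite /mult2 (bigID (fun v : V => (v <= A)%MS)) /=; congr (_ + _).
  apply: eq_bigl => v; rewrite /sp sub_col.
  by case: (v <= A)%MS; rewrite ?andbT ?andbF.
apply: eq_bigl => v; rewrite /sp sub_col.
case vA: (v <= A)%MS; rewrite /= ?andbF ?andbT.
  apply/esym/negP => h; move/negP: xA; apply.
  by rewrite -[x]add0r -(vec_addxx v) -addrA addmx_sub.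
case: (altP (v =P 0%R)) => [->|] //=.
by rewrite add0r (negbTE xA).
Qed.

Lemma super j (A : 'M['F_2]_(j, N.+1)) (K : multiset2 N) M :
  row_free A ->
  (forall x : V, ~~ (x <= A)%MS -> mult2 K (sp (col_mx x A)) <= M) ->
  2 ^ j * (card_ms2 K - mult2 K (sp A)) <= (2 ^ N.+1 - 2 ^ j) * (M - mult2 K (sp A)).
Proof.
move=> fA HM; set m := mult2 K (sp A).
rewrite (card_split A) -/m addKn.
pose T x := \sum_(y : V | ((y + x)%R <= A)%MS) K y.
have sumT : \sum_(x : V | ~~ (x <= A)%MS) T x = 2 ^ j * \sum_(y : V | ~~ (y <= A)%MS) K y.
  rewrite /T (exchange_big_dep (fun y : V => ~~ (y <= A)%MS)) /=; last first.
    move=> x y xA h; apply/negP => yA; move/negP: xA; apply.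
    by rewrite -[x]add0r -(vec_addxx y) -addrA addmx_sub.
  rewrite big_distrr /=; apply: eq_bigr => y yA.
  rewrite sum_nat_const; congr (_ * _).
  transitivity #|image (fun z : V => (z + y)%R) (sp A)|.
    apply: eq_card => x; apply/idP/imageP.
      case/andP => _ h; exists (y + x)%R; first by [].
      by rewrite addrC addrA vec_addxx add0r.
    case=> z zA ->; apply/andP; split.
      apply: contra yA => h; rewrite -[y]add0r -(vec_addxx z) -addrA.
      by rewrite addmx_sub // addrC.
    by rewrite addrA [(y + z)%R]addrC -addrA vec_addxx addr0.
  by rewrite card_image ?card_sp //; exact: addIr.
rewrite -sumT.
have -> : 2 ^ N.+1 - 2 ^ j = #|[predC sp A]|.
  by have := cardC (sp A); rewrite card_sp // cardV => <-; rewrite addKn.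
rewrite -sum_nat_const; apply: leq_sum => x.
move=> xA; have := HM x xA; rewrite mult_col // -/m.
rewrite -/(T x) => h; clearbody m T; lia.
Qed.

Lemma super_le j (A : 'M['F_2]_(j, N.+1)) (K : multiset2 N) M :
  row_free A -> j < N.+1 ->
  (forall x : V, ~~ (x <= A)%MS -> mult2 K (sp (col_mx x A)) <= M) ->
  mult2 K (sp A) <= M.
Proof.
move=> fA lt HM; case: (exists_out fA lt) => x xA.
by apply: leq_trans (HM x xA); rewrite mult_col // leq_addr.
Qed.

Definition Mx j (K : multiset2 N) :=
  \max_(A : 'M['F_2]_(j, N.+1) | row_free A) mult2 K (sp A).

Lemma Mx_ge j (K : multiset2 N) (A : 'M['F_2]_(j, N.+1)) :
  row_free A -> mult2 K (sp A) <= Mx j K.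
Proof. move=> fA; rewrite /Mx. exact: (@leq_bigmax_cond _ (fun A : 'M['F_2]_(j, N.+1) => row_free A) (fun A => mult2 K (sp A)) A fA). Qed.

Lemma Mx_att j (K : multiset2 N) (A0 : 'M['F_2]_(j, N.+1)) :
  row_free A0 -> exists2 A : 'M['F_2]_(j, N.+1), row_free A & Mx j K = mult2 K (sp A).
Proof.
move=> f0; have : 0 < #|[pred A : 'M['F_2]_(j, N.+1) | row_free A]|.
  by apply/card_gt0P; exists A0.
move=> H; case: (eq_bigmax_cond (fun A => mult2 K (sp A)) H) => A hA e.
exists A; first by move: hA; rewrite inE.
by rewrite /Mx -e; apply: eq_bigl => B; rewrite inE.
Qed.

Definition A0 : 'M['F_2]_(0, N.+1) := 0%R.
Lemma A0_free : row_free A0.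
Proof. by rewrite /row_free; have := rank_leq_row A0; case: (\rank _). Qed.
Lemma mult_A0 (K : multiset2 N) : mult2 K (sp A0) = 0.
Proof.
rewrite /mult2 big_pred0 // => v; case: (altP (v =P 0%R)) => //= nz.
apply/negbTE/negP => h; have := mxrankS h; rewrite rank_rV nz.
by have := rank_leq_row A0; case: (\rank A0).
Qed.

Lemma geo_bound (K : multiset2 N) w : 2 <= N -> feasible2 2 w K ->
  exists p l, [/\ p <= l, l <= w,
    card_ms2 K <= (2 ^ N.+1 - 1) * p,
    2 * (card_ms2 K - p) <= (2 ^ N.+1 - 2) * (l - p) &
    4 * (card_ms2 K - l) <= (2 ^ N.+1 - 4) * (w - l)].
Proof.
move=> N2 feas.
have H1 : forall x : V, ~~ (x <= A0)%MS -> mult2 K (sp (col_mx x A0)) <= Mx 1 K.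
  by move=> x xA; apply: Mx_ge; exact: row_free_col A0_free xA.
have [x0 x0A] := exists_out A0_free (ltn0Sn N).
have [A1 f1 e1] := Mx_att K (row_free_col A0_free x0A).
have H2 : forall x : V, ~~ (x <= A1)%MS -> mult2 K (sp (col_mx x A1)) <= Mx 2 K.
  by move=> x xA; apply: Mx_ge; exact: row_free_col f1 xA.
have lt1 : 1 < N.+1 by lia.
have lt2 : 2 < N.+1 by lia.
have [x1 x1A] := exists_out f1 lt1.
have [A2 f2 e2] := Mx_att K (row_free_col f1 x1A).
have H3 : forall x : V, ~~ (x <= A2)%MS -> mult2 K (sp (col_mx x A2)) <= w.
  by move=> x xA; apply: feas; apply/eqP; exact: row_free_col f2 xA.
exists (Mx 1 K), (Mx 2 K); split.
- by rewrite e1; apply: super_le H2.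
- by rewrite e2; apply: super_le H3.
- by have := super A0_free H1; rewrite mult_A0 !subn0 mul1n expn0.
- by have := super f1 H2; rewrite -e1 expn1.
- by have := super f2 H3; rewrite -e2.
Qed.
End Geo.


Section Half.
Variable N : nat.
Local Notation V := 'rV['F_2]_(N.+1).
Variable D : pred V.
Hypothesis Dadd : forall x y, D x -> D y -> D (x + y)%R.
Variable phi : V -> 'F_2.
Hypothesis phiD : forall x y, phi (x + y)%R = (phi x + phi y)%R.

Lemma half_inj (a : V) (c : 'F_2) : D a -> phi a = 1%R ->
  #|[pred x | D x && (phi x == c)]| <= #|[pred x | D x && (phi x == c + 1)%R]|.
Proof.
move=> Da pa.
rewrite -(card_image (addIr a)); apply: subset_leq_card; apply/subsetP => y.
case/imageP => x; rewrite inE => /andP [Dx /eqP px] ->.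
by rewrite inE Dadd //= phiD px pa.
Qed.

Lemma F2_11 : (1 + 1 : 'F_2)%R = 0%R.
Proof. exact: F2_addxx. Qed.

Lemma half_le : #|[pred x | D x && (phi x == 1%R)]| <= #|[pred x | D x && (phi x == 0%R)]|.
Proof.
case: (pickP [pred a | D a && (phi a == 1%R)]) => [a /andP [Da /eqP pa]|none].
  by have := half_inj 1%R Da pa; rewrite F2_11.
rewrite (eq_card0 none) //.
Qed.

Lemma half_eq (a : V) : D a -> phi a = 1%R ->
  #|[pred x | D x && (phi x == 1%R)]| = #|[pred x | D x && (phi x == 0%R)]|.
Proof.
move=> Da pa; apply/eqP; rewrite eqn_leq half_le /=.
by have := half_inj 0%R Da pa; rewrite add0r.
Qed.

Lemma half_sum : #|D| = #|[pred x | D x && (phi x == 0%R)]| + #|[pred x | D x && (phi x == 1%R)]|.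
Proof.
rewrite -(cardID [pred x | phi x == 0%R] D); congr (_ + _); apply: eq_card => x; rewrite !inE.
by rewrite andbC; case: (F2_cases (phi x)) => ->; rewrite ?andbF ?andbT.
Qed.
End Half.

Section Counts.
Variable n : nat.
Local Notation V := 'rV['F_2]_(n.+2).

Definition i1 : 'I_(n.+2) := @Ordinal (n.+2) 1 isT.
Definition phi0 (v : V) : 'F_2 := v ord0 ord0.
Definition phi1 (v : V) : 'F_2 := v ord0 i1.
Definition e0 : V := delta_mx ord0 ord0.
Definition e1 : V := delta_mx ord0 i1.

Lemma phi0D x y : phi0 (x + y)%R = (phi0 x + phi0 y)%R. Proof. by rewrite /phi0 mxE. Qed.
Lemma phi1D x y : phi1 (x + y)%R = (phi1 x + phi1 y)%R. Proof. by rewrite /phi1 mxE. Qed.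
Lemma phi0_e0 : phi0 e0 = 1%R. Proof. by rewrite /phi0 /e0 mxE. Qed.
Lemma phi0_e1 : phi0 e1 = 0%R. Proof. by rewrite /phi0 /e1 mxE. Qed.
Lemma phi1_e1 : phi1 e1 = 1%R. Proof. by rewrite /phi1 /e1 mxE !eqxx. Qed.
Lemma phi0_0 : phi0 0%R = 0%R. Proof. by rewrite /phi0 mxE. Qed.
Lemma phi1_0 : phi1 0%R = 0%R. Proof. by rewrite /phi1 mxE. Qed.

Lemma mult_ind (P S : pred V) :
  mult2 (fun v => nat_of_bool (P v)) S = #|[pred v | (v != 0%R) && S v && P v]|.
Proof.
rewrite /mult2 -sum1_card (bigID P) /= [X in _ + X]big1 ?addn0.
  by apply: eq_big => [v|v /andP [_ ->]]; rewrite ?inE.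
by move=> v /andP [_ /negbTE ->].
Qed.

Lemma sp_add m (S : 'M['F_2]_(m, n.+2)) x y : sp S x -> sp S y -> sp S (x + y)%R.
Proof. exact: addmx_sub. Qed.

Lemma tot1 : mult2 (fun _ : V => 1) predT = 2 ^ n.+2 - 1.
Proof.
rewrite (_ : (fun _ : V => 1) = fun v => nat_of_bool (predT v)) // mult_ind.
rewrite subn1; have := cardC1 (0%R : V); rewrite cardV => <-.
apply: eq_card => v; rewrite !inE; by case: (v != 0%R).
Qed.

Lemma mult_ind0 (P S : pred V) : P 0%R = false ->
  mult2 (fun v => nat_of_bool (P v)) S = #|[pred v | S v && P v]|.
Proof.
move=> P0; rewrite mult_ind; apply: eq_card => v; rewrite !inE.
by case: (altP (v =P 0%R)) => [->|] //=; rewrite P0 andbF.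
Qed.

Lemma pl1 (S : 'M['F_2]_(3, n.+2)) : row_free S -> mult2 (fun _ : V => 1) (sp S) = 7.
Proof.
move=> fS; rewrite (_ : (fun _ : V => 1) = fun v => nat_of_bool (predT v)) // mult_ind.
have := cardD1 (0%R : V) (sp S); rewrite card_sp // (_ : (0%R : V) \in sp S = true); last exact: sub0mx.
rewrite add1n => [[->]].
by apply: eq_card => v; rewrite !inE andbT.
Qed.

Lemma cardA0 : #|[pred v : V | predT v && (phi0 v == 0%R)]| = 2 ^ n.+1.
Proof.
have := half_sum (@predT V) phi0.
rewrite -(@half_eq _ predT (fun _ _ _ _ => isT) phi0 phi0D e0 isT phi0_e0).
rewrite (_ : #|predT| = 2 ^ n.+2); last by rewrite -cardV; apply: eq_card.
rewrite expnS => h; apply/eqP; rewrite -(eqn_pmul2l (isT : 0 < 2)) mul2n -addnn -h //.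
Qed.

Lemma cardA1 : #|[pred v : V | predT v && (phi0 v == 1%R)]| = 2 ^ n.+1.
Proof. by rewrite (@half_eq _ predT (fun _ _ _ _ => isT) phi0 phi0D e0 isT phi0_e0) cardA0. Qed.

Lemma card00 : #|[pred v : V | [pred v | predT v && (phi0 v == 0%R)] v && (phi1 v == 0%R)]| = 2 ^ n.
Proof.
set D0 := [pred v : V | predT v && (phi0 v == 0%R)].
have D0add : forall x y, D0 x -> D0 y -> D0 (x + y)%R.
  by move=> x y; rewrite !inE /= phi0D => /eqP -> /eqP ->; rewrite addr0.
have De1 : D0 e1 by rewrite inE /= phi0_e1.
have := half_sum D0 phi1; rewrite -(@half_eq _ D0 D0add phi1 phi1D e1 De1 phi1_e1).
rewrite (_ : #|D0| = 2 ^ n.+1); last exact: cardA0.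
rewrite expnS => h; apply/eqP; rewrite -(eqn_pmul2l (isT : 0 < 2)) mul2n -addnn -h //.
Qed.

Lemma totA : mult2 (fun v : V => nat_of_bool (phi0 v == 1%R)) predT = 2 ^ n.+1.
Proof. by rewrite mult_ind0 ?phi0_0 // -cardA1. Qed.

Lemma plA (S : 'M['F_2]_(3, n.+2)) : row_free S ->
  mult2 (fun v : V => nat_of_bool (phi0 v == 1%R)) (sp S) <= 4.
Proof.
move=> fS; rewrite mult_ind0 ?phi0_0 //.
have := half_sum (sp S) phi0; rewrite card_sp //.
have := half_le (@sp_add _ S) phi0D; rewrite (_ : 2 ^ 3 = 8) //; lia.
Qed.

Definition PB (v : V) := (phi0 v == 1%R) || (phi1 v == 1%R).

Lemma notPB v : ~~ PB v = (phi0 v == 0%R) && (phi1 v == 0%R).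
Proof. by rewrite /PB; case: (F2_cases (phi0 v)) => ->; case: (F2_cases (phi1 v)) => ->. Qed.

Lemma totB : mult2 (fun v : V => nat_of_bool (PB v)) predT = 2 ^ n.+2 - 2 ^ n.
Proof.
rewrite mult_ind0; last by rewrite /PB phi0_0 phi1_0.
have := cardC PB; rewrite cardV => <-.
rewrite -card00 (_ : #|[predC PB]| = #|[pred v : V | [pred v | predT v && (phi0 v == 0%R)] v && (phi1 v == 0%R)]|).
  by rewrite addnK.
by apply: eq_card => v; rewrite !inE notPB.
Qed.

Lemma plB (S : 'M['F_2]_(3, n.+2)) : row_free S ->
  mult2 (fun v : V => nat_of_bool (PB v)) (sp S) <= 6.
Proof.
move=> fS; rewrite mult_ind0; last by rewrite /PB phi0_0 phi1_0.
pose D0 : pred V := fun v => sp S v && (phi0 v == 0%R).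
have D0add : forall x y, D0 x -> D0 y -> D0 (x + y)%R.
  move=> x y; rewrite /D0 phi0D => /andP [sx /eqP ->] /andP [sy /eqP ->].
  by rewrite addr0 sp_add.
have h1 := half_sum (sp S) phi0; rewrite card_sp // in h1.
have h2 := half_le (@sp_add _ S) phi0D.
have h3 := half_sum D0 phi1.
have h4 := half_le D0add phi1D.
have h5 := cardID PB (sp S).
have e5 : #|[predD sp S & PB]| = #|[pred x | D0 x && (phi1 x == 0%R)]|.
  apply: eq_card => v; rewrite !inE notPB /= /D0.
  by case: (phi0 v == 0%R); case: (phi1 v == 0%R); rewrite ?andbF ?andbT.
have e6 : #|[predI sp S & PB]| = #|[pred v | sp S v && PB v]|.
  apply: eq_card => v; rewrite !inE /=.
  by case: (PB v); rewrite ?andbF ?andbT.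
have e7 : #|D0| = #|[pred x | sp S x && (phi0 x == 0%R)]| by apply: eq_card.
rewrite card_sp // in h5.
move: h1 h5; rewrite (_ : 2 ^ 3 = 8) // => h1 h5.
clearbody D0. have t1 : 4 <= #|[pred x | sp S x & phi0 x == 0%R]| by lia.
have t2 : 4 <= #|D0| by lia. have t3 : 2 <= #|[pred x | D0 x & phi1 x == 0%R]| by lia.
rewrite e5 e6 in h5. lia.
Qed.

Lemma totP : mult2 (fun v : V => nat_of_bool (v == e0)) predT = 1.
Proof.
rewrite mult_ind0; last first.
  by apply/negbTE/eqP => h; have := phi0_e0; rewrite -h phi0_0 => /eqP.
transitivity #|pred1 e0|; last exact: card1.
by apply: eq_card => v; rewrite !inE.
Qed.

Lemma plP (S : pred V) : mult2 (fun v : V => nat_of_bool (v == e0)) S <= 1.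
Proof.
rewrite mult_ind; apply: leq_trans (_ : _ <= #|pred1 e0|) _; last by rewrite card1.
apply: subset_leq_card; apply/subsetP => v.
by rewrite !inE => /andP [_ ->].
Qed.
End Counts.

Section Constr.
Variable n : nat.
Local Notation V := 'rV['F_2]_(n.+2).

Lemma multD (f g : V -> nat) S :
  mult2 (fun v => f v + g v) S = mult2 f S + mult2 g S.
Proof. exact: big_split. Qed.
Lemma multM c (f : V -> nat) S : mult2 (fun v => c * f v) S = c * mult2 f S.
Proof. by rewrite /mult2 big_distrr. Qed.

Definition Kc (t a b m : nat) : multiset2 n.+1 :=
  fun v => t * 1 + a * nat_of_bool (phi0 v == 1%R) + b * nat_of_bool (PB v)
           + m * nat_of_bool (v == e0 n).

Lemma Kc_card t a b m : card_ms2 (Kc t a b m) =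
  t * (2 ^ n.+2 - 1) + a * 2 ^ n.+1 + b * (2 ^ n.+2 - 2 ^ n) + m.
Proof.
by rewrite /card_ms2 /Kc !multD !multM tot1 totA totB totP muln1.
Qed.

Lemma Kc_feas t a b m : feasible2 2 (t * 7 + a * 4 + b * 6 + m) (Kc t a b m).
Proof.
move=> S rS; have fS : row_free S by rewrite /row_free rS.
rewrite (_ : in_sub S = sp S) // /Kc !multD !multM pl1 //.
apply: leq_add; [apply: leq_add; [apply: leq_add|]|].
- by [].
- by rewrite leq_mul2l plA ?orbT.
- by rewrite leq_mul2l plB ?orbT.
- by rewrite -[X in _ <= X]muln1 leq_mul2l plP orbT.
Qed.
End Constr.


Lemma ceil_le x b y : 0 < b -> (ceildiv x b <= y) = (x <= y * b).
Proof.
move=> b0; rewrite /ceildiv -ltnS ltn_divLR //.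
apply/idP/idP; rewrite mulSn; lia.
Qed.

Lemma ceil_nest d a b : 0 < a -> 0 < b -> ceildiv (ceildiv d a) b = ceildiv d (a * b).
Proof.
move=> a0 b0; have ab0 : 0 < a * b by rewrite muln_gt0 a0.
have E : forall y, (ceildiv (ceildiv d a) b <= y) = (ceildiv d (a * b) <= y).
  by move=> y; rewrite !ceil_le // (mulnC a b) mulnA.
apply/eqP; rewrite eqn_leq E leqnn /= -E leqnn //.
Qed.

Lemma ceil_mul c b : 0 < b -> ceildiv (c * b) b = c.
Proof.
move=> b0; apply/eqP; rewrite eqn_leq ceil_le // leqnn /=.
case: c => // c; rewrite ltnNge ceil_le // leq_pmul2r //; lia.
Qed.

Definition Cw (w : nat) : nat := 4 * (w %/ 7) + nth 0 [:: 0; 0; 0; 1; 2; 2; 3] (w %% 7).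

Definition hh c := c + ceildiv c 2 + ceildiv c 4.

Lemma hh_Cw w : hh (Cw w) <= w.
Proof.
rewrite /hh /Cw /ceildiv.
have e := divn_eq w 7; have lt : w %% 7 < 7 by rewrite ltn_mod.
move: e lt; move: (w %/ 7) (w %% 7) => q r e lt.
do 7! (case: r e lt => [|r] e lt; first by rewrite /=; lia).
by [].
Qed.

Lemma hh_max w c : hh c <= w -> c <= Cw w.
Proof.
rewrite /hh /Cw /ceildiv.
have e := divn_eq w 7; have lt : w %% 7 < 7 by rewrite ltn_mod.
move: e lt; move: (w %/ 7) (w %% 7) => q r e lt.
do 7! (case: r e lt => [|r] e lt; first by rewrite /=; lia).
by [].
Qed.

Definition FF V d := ceildiv d (2 * V) + ceildiv d (4 * V) + ceildiv d (8 * V).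

Lemma FF_hh V d : 0 < V -> FF V d = hh (ceildiv d (2 * V)).
Proof.
move=> V0; rewrite /FF /hh !ceil_nest ?muln_gt0 ?V0 //.
have e1 : 2 * V * 2 = 4 * V by rewrite mulnAC.
have e2 : 2 * V * 4 = 8 * V by rewrite mulnAC.
by rewrite e1 e2.
Qed.

Lemma up_arith V n w p l : 0 < V -> p <= l -> l <= w -> w < n ->
  n <= (8 * V + 7) * p ->
  2 * (n - p) <= (8 * V + 6) * (l - p) ->
  4 * (n - l) <= (8 * V + 4) * (w - l) ->
  FF V (n - w) <= w.
Proof.
move=> V0 pl lw wn ha hb hc.
have [a ea] : exists a, w = l + a by exists (w - l); lia.
have [b eb] : exists b, l = p + b by exists (l - p); lia.
have [d ed] : exists d, n = w + d by exists (n - w); lia.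
subst w l n; rewrite (_ : p + b + a + d - (p + b + a) = d); last lia.
have hc' : d <= a * (2 * V) by nia.
have hb2 : 2 * d + 2 * a <= 8 * V * b + 4 * b by nia.
have hb' : d <= b * (4 * V).
  have : (2 * V + 1) * d <= (2 * V + 1) * (b * (4 * V)) by nia.
  by rewrite leq_pmul2l // addn1.
have ha2 : d + a + b <= (8 * V + 6) * p by nia.
have ha' : d <= p * (8 * V).
  have : (4 * V + 3) * d <= (4 * V + 3) * (p * (8 * V)) by nia.
  by rewrite leq_pmul2l // addn3.
have c1 : ceildiv d (2 * V) <= a by rewrite ceil_le ?muln_gt0 ?V0.
have c2 : ceildiv d (4 * V) <= b by rewrite ceil_le ?muln_gt0 ?V0.
have c3 : ceildiv d (8 * V) <= p by rewrite ceil_le ?muln_gt0 ?V0.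
rewrite /FF; lia.
Qed.

Lemma FF_max V w d : 0 < V -> FF V d <= w -> d <= Cw w * (2 * V).
Proof.
move=> V0; rewrite FF_hh // => /hh_max h.
have : d <= ceildiv d (2 * V) * (2 * V) by rewrite -ceil_le ?muln_gt0 ?V0.
move=> h2; apply: leq_trans h2 _; by rewrite leq_mul2r h orbT.
Qed.

Lemma FF_G V w : 0 < V -> FF V (Cw w * (2 * V)) <= w.
Proof. by move=> V0; rewrite FF_hh // ceil_mul ?muln_gt0 ?V0 // hh_Cw. Qed.


Lemma gg_eq n' d : griesmer_g 2 (n'.+3 - 2) n'.+4 d = d + FF (2 * 2 ^ n' - 1) d.
Proof.
rewrite /griesmer_g /FF.
have e1 : n'.+4 - (n'.+3 - 2) = 3 by lia.
have e2 : n'.+3 - 2 = n'.+1 by lia.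
rewrite e1 e2.
rewrite /vq.
have e3 : forall x, x %/ (2 - 1) = x by move=> x; rewrite divn1.
rewrite e3 expnS.
rewrite big_ltn //.
rewrite big_ltn // big_ltn // big_geq // addn0.
have e4 : 2 ^ 2 = 4 by []. have e5 : 2 ^ 3 = 8 by [].
rewrite expn1 e4 e5 !addnA.
reflexivity.
Qed.

Lemma feas_mono N r w w' (K : multiset2 N) : w <= w' -> feasible2 r w K -> feasible2 r w' K.
Proof. by move=> le f S rS; apply: leq_trans (f S rS) le. Qed.

Unset Implicit Arguments.
Unset Strict Implicit.

Theorem mainTheorem6 (k w : nat) : 4 <= k -> 4 <= w ->
  exists n : nat, is_m2 (k - 1) 2 w n /\ is_largest (griesmer_ok 2 (k - 1) 2 w) n.
Proof.
move=> k4 w4.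
have [n' ek] : exists n', k = n'.+4 by exists (k - 4); lia.
subst k; rewrite (_ : n'.+4 - 1 = n'.+3); last lia.
set P := 2 ^ n'.
have P0 : 0 < P by rewrite expn_gt0.
set V := 2 * P - 1.
have V0 : 0 < V by rewrite /V; lia.
have X4 : 2 ^ n'.+4 = 8 * V + 8 by rewrite /V !expnS -/P; lia.
have X3 : 2 ^ n'.+3 = 4 * V + 4 by rewrite /V !expnS -/P; lia.
have X2 : 2 ^ n'.+2 = 2 * V + 2 by rewrite /V !expnS -/P; lia.
set G := w + Cw w * (2 * V).
have gok : forall m, griesmer_ok 2 n'.+3 2 w m <-> w <= m /\ FF V (m - w) <= w.
  move=> m; rewrite /griesmer_ok gg_eq -/P -/V; split => [[h1 h2]|[h1 h2]]; split => //; lia.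
have ub : forall m, w <= m -> FF V (m - w) <= w -> m <= G.
  move=> m h1 h2; have := FF_max V0 h2; rewrite /G; lia.
exists G; split; last first.
  split; first by apply/gok; split; [rewrite /G leq_addr | rewrite /G addKn FF_G].
  by move=> m /gok [h1 h2]; apply: ub.
split.
-
  have e := divn_eq w 7; have lt : w %% 7 < 7 by rewrite ltn_mod.
  have key : forall t a b mm, t * 7 + a * 4 + b * 6 + mm <= w ->
      card_ms2 (@Kc (n'.+2) t a b mm) = G ->
      exists K : multiset2 n'.+3, feasible2 2 w K /\ card_ms2 K = G.
    move=> t a b mm hw hc; exists (@Kc (n'.+2) t a b mm); split => //.
    exact: feas_mono hw (@Kc_feas (n'.+2) _ _ _ _).
  move: (@Kc_card (n'.+2)); rewrite X4 X3 X2 => KC.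
  set q := w %/ 7 in e.
  have S1 : 8 * V + 8 - 1 = 8 * V + 7 by lia.
  have S2 : 8 * V + 8 - (2 * V + 2) = 6 * V + 6 by lia.
  case E: (w %% 7) lt e => [|[|[|[|[|[|[|r]]]]]]] lt e //.
  + apply: (key q 0 0 0); first lia.
    rewrite KC /G /Cw E -/q /= e S1 S2; lia.
  + apply: (key q 0 0 1); first lia.
    rewrite KC /G /Cw E -/q /= e S1 S2; lia.
  + apply: (key q 0 0 2); first lia.
    rewrite KC /G /Cw E -/q /= e S1 S2; lia.
  + have [q' eq'] : exists q', q = q'.+1 by exists q.-1; lia.
    apply: (key q' 1 1 0); first lia.
    rewrite KC /G /Cw E -/q /= e S1 S2 eq'; lia.
  + apply: (key q 1 0 0); first lia.
    rewrite KC /G /Cw E -/q /= e S1 S2; lia.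
  + apply: (key q 1 0 1); first lia.
    rewrite KC /G /Cw E -/q /= e S1 S2; lia.
  + apply: (key q 0 1 0); first lia.
    rewrite KC /G /Cw E -/q /= e S1 S2; lia.
- move=> m [K [feas <-]].
  case: (leqP (card_ms2 K) w) => hw.
    by apply: leq_trans hw _; rewrite /G leq_addr.
  have [p [l [pl lw ha hb hc]]] := geo_bound (isT : 2 <= n'.+3) feas.
  move: ha hb hc; rewrite X4 => ha hb hc.
  apply: ub; first exact: ltnW.
  apply: (up_arith V0 pl lw hw); rewrite ?(_ : 8 * V + 8 - 1 = 8 * V + 7) ?(_ : 8 * V + 8 - 2 = 8 * V + 6)
    ?(_ : 8 * V + 8 - 4 = 8 * V + 4) //; lia.
Qed.
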